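(* Let $M$ be a simply-connected domain in $\mathbb{R}^2(u,v)$, let $\omega,H,Q,R:M\to\mathbb{R}$ be smooth, and let $\Phi=(\Phi_1,\Phi_2)$ and $\Psi=(\Psi_1,\Psi_2)$, $M\to\mathrm{SL}_2\mathbb{R}\times\mathrm{SL}_2\mathbb{R}$, solve the Lax systems (L1) and (L2) below, respectively. Write $\Phi_1=\begin{pmatrix}\Phi_{11}&\Phi_{12}\\\Phi_{13}&\Phi_{14}\end{pmatrix}$, $\Phi_2=\begin{pmatrix}\Phi_{21}&\Phi_{22}\\\Phi_{23}&\Phi_{24}\end{pmatrix}$, and similarly for $\Psi$. Define the projected hyperbolic Gauss maps $G^+_\Phi=\big(\tfrac{\Phi_{11}}{\Phi_{13}},\tfrac{\Phi_{21}}{\Phi_{23}}\big)$, $G^-_\Phi=\big(\tfrac{\Phi_{12}}{\Phi_{14}},\tfrac{\Phi_{22}}{\Phi_{24}}\big)$, $G^+_\Psi=\big(\tfrac{\Psi_{11}}{\Psi_{13}},-\tfrac{\Psi_{24}}{\Psi_{22}}\big)$, $G^-_\Psi=\big(\tfrac{\Psi_{12}}{\Psi_{14}},-\tfrac{\Psi_{23}}{\Psi_{21}}\big)$, each considered on an open set $W\subset M$ where its denominators do not vanish. Then on such $W$: (1) $\partial_uG^+_\Phi\equiv0$ (resp. $\partial_uG^+_\Psi\equiv0$) iff $H\equiv1$ and $Q\equiv0$; (2) $\partial_vG^+_\Phi\equiv0$ (resp. $\partial_vG^+_\Psi\equiv0$) iff $H\equiv1$ and $R\equiv0$; (3) $\partial_uG^-_\Phi\equiv0$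 (resp. $\partial_uG^-_\Psi\equiv0$) iff $H\equiv-1$ and $Q\equiv0$; (4) $\partial_vG^-_\Phi\equiv0$ (resp. $\partial_vG^-_\Psi\equiv0$) iff $H\equiv-1$ and $R\equiv0$.
   Context: (L1): $(\Phi_1)_u=\Phi_1\mathcal U_1$, $(\Phi_1)_v=\Phi_1\mathcal V_1$, $(\Phi_2)_u=\Phi_2\mathcal U_2$, $(\Phi_2)_v=\Phi_2\mathcal V_2$ with $\mathcal U_1=\begin{pmatrix}\frac{\omega_u}{4}&\frac12e^{\omega/2}(H+1)\\-e^{-\omega/2}Q&-\frac{\omega_u}{4}\end{pmatrix}$, $\mathcal V_1=\begin{pmatrix}-\frac{\omega_v}{4}&e^{-\omega/2}R\\-\frac12e^{\omega/2}(H-1)&\frac{\omega_v}{4}\end{pmatrix}$, $\mathcal U_2=\begin{pmatrix}-\frac{\omega_u}{4}&e^{-\omega/2}Q\\-\frac12e^{\omega/2}(H-1)&\frac{\omega_u}{4}\end{pmatrix}$, $\mathcal V_2=\begin{pmatrix}\frac{\omega_v}{4}&\frac12e^{\omega/2}(H+1)\\-e^{-\omega/2}R&-\frac{\omega_v}{4}\end{pmatrix}$. (L2): $(\Psi_1)_u=\Psi_1\mathcal U_1$, $(\Psi_1)_v=\Psi_1\mathcal V_1$ (same $\mathcal U_1,\mathcal V_1$), $(\Psi_2)_u=\Psi_2\begin{pmatrix}\frac{\omega_u}{4}&\frac12e^{\omega/2}(H-1)\\-e^{-\omega/2}Q&-\frac{\omega_u}{4}\end{pmatrix}$, $(\Psi_2)_v=\Psi_2\begin{pmatrix}-\frac{\omega_v}{4}&e^{-\omega/2}R\\-\frac12e^{\omega/2}(H+1)&\frac{\omega_v}{4}\end{pmatrix}$.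 These are the frames of the timelike surfaces $\varphi=\Phi_1\Phi_2^t$ and $\psi=\Psi_1\Psi_2^{-1}$ in $\mathbb{H}^3_1(-1)\cong\mathrm{SL}_2\mathbb{R}$ with metric $e^\omega du\,dv$, mean curvature $H$ and Hopf pairs $Q,R$; $G^\pm$ are the images of the null lines $[\varphi\pm N]$ in $\mathbb{R}^2(u,v)$. A map with $\partial_u=0$ is called Lorentz antiholomorphic, with $\partial_v=0$ Lorentz holomorphic. *)

(* Defs.v *)
From Stdlib Require Import Reals List.
From Coquelicot Require Import Coquelicot.
Open Scope R_scope.

(** * Sets and functions on R^2(u,v) are curried: [M : R -> R -> Prop], [f : R -> R -> R]. *)

Definition open2 (M : R -> R -> Prop) : Prop :=
  open (fun p : R * R => M (fst p) (snd p)).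

(** A continuous map [R -> R*R] / [R -> R -> R*R]; continuous maps on [0,1]
    (resp. [0,1]^2) all extend continuously to R (resp. R^2) by clamping,
    so quantifying over globally continuous maps is faithful. *)
Definition cont_path (g : R -> R * R) : Prop := forall t : R, continuous g t.
Definition cont_homotopy (h : R -> R -> R * R) : Prop :=
  forall p : R * R, continuous (fun q : R * R => h (fst q) (snd q)) p.

Definition path_in (M : R -> R -> Prop) (g : R -> R * R) : Prop :=
  cont_path g /\ forall t, 0 <= t <= 1 -> M (fst (g t)) (snd (g t)).

Definition path_connected2 (M : R -> R -> Prop) : Prop :=
  forall a b : R * R, M (fst a) (snd a) -> M (fst b) (snd b) ->
    exists g, path_in M g /\ g 0 = a /\ g 1 = b.

Definition loops_contractible (M : R -> R -> Prop) : Prop :=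
  forall g, path_in M g -> g 0 = g 1 ->
    exists h : R -> R -> R * R, cont_homotopy h /\
      (forall s t, 0 <= s <= 1 -> 0 <= t <= 1 -> M (fst (h s t)) (snd (h s t))) /\
      (forall s, 0 <= s <= 1 -> h s 0 = g s /\ h s 1 = g 0) /\
      (forall t, 0 <= t <= 1 -> h 0 t = g 0 /\ h 1 t = g 0).

Definition simply_connected_domain (M : R -> R -> Prop) : Prop :=
  (exists u v, M u v) /\ open2 M /\ path_connected2 M /\ loops_contractible M.

(** * Smoothness (C^infinity on an open set) via iterated partial derivatives.
    [true] = partial in u, [false] = partial in v. *)
Fixpoint iter_partial (l : list bool) (f : R -> R -> R) : R -> R -> R :=
  match l with
  | nil => f
  | b :: l' =>
      let g := iter_partial l' f in
      if b then (fun u v => Derive (fun x => g x v) u)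
           else (fun u v => Derive (fun y => g u y) v)
  end.

Definition smooth_on (M : R -> R -> Prop) (f : R -> R -> R) : Prop :=
  forall (l : list bool) (u v : R), M u v ->
    ex_derive (fun x => iter_partial l f x v) u /\
    ex_derive (fun y => iter_partial l f u y) v /\
    continuous (fun p : R * R => iter_partial l f (fst p) (snd p)) (u, v).

Definition du (f : R -> R -> R) : R -> R -> R := fun u v => Derive (fun x => f x v) u.
Definition dv (f : R -> R -> R) : R -> R -> R := fun u v => Derive (fun y => f u y) v.

(** * 2x2 real matrices, entries numbered as in the paper:
      ( m1 m2 )
      ( m3 m4 ) *)
Record mat2 := Mat2 { m1 : R; m2 : R; m3 : R; m4 : R }.

Definition mmul (A B : mat2) : mat2 :=
  Mat2 (m1 A * m1 B + m2 A * m3 B) (m1 A * m2 B + m2 A * m4 B)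
       (m3 A * m1 B + m4 A * m3 B) (m3 A * m2 B + m4 A * m4 B).

Definition det2 (A : mat2) : R := m1 A * m4 A - m2 A * m3 A.

Definition SL2_valued (M : R -> R -> Prop) (F : R -> R -> mat2) : Prop :=
  forall u v, M u v -> det2 (F u v) = 1.

Definition lax_u (M : R -> R -> Prop) (F A : R -> R -> mat2) : Prop :=
  forall u v, M u v ->
    let D := mmul (F u v) (A u v) in
    is_derive (fun x => m1 (F x v)) u (m1 D) /\ is_derive (fun x => m2 (F x v)) u (m2 D) /\
    is_derive (fun x => m3 (F x v)) u (m3 D) /\ is_derive (fun x => m4 (F x v)) u (m4 D).

Definition lax_v (M : R -> R -> Prop) (F B : R -> R -> mat2) : Prop :=
  forall u v, M u v ->
    let D := mmul (F u v) (B u v) in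
    is_derive (fun y => m1 (F u y)) v (m1 D) /\ is_derive (fun y => m2 (F u y)) v (m2 D) /\
    is_derive (fun y => m3 (F u y)) v (m3 D) /\ is_derive (fun y => m4 (F u y)) v (m4 D).

Section LaxMatrices.
Variables (w H Q Rr : R -> R -> R).

Definition U1 : R -> R -> mat2 := fun u v =>
  Mat2 (du w u v / 4) (/2 * exp (w u v / 2) * (H u v + 1))
       (- exp (- w u v / 2) * Q u v) (- du w u v / 4).
Definition V1 : R -> R -> mat2 := fun u v =>
  Mat2 (- dv w u v / 4) (exp (- w u v / 2) * Rr u v)
       (- (/2) * exp (w u v / 2) * (H u v - 1)) (dv w u v / 4).
Definition U2 : R -> R -> mat2 := fun u v =>
  Mat2 (- du w u v / 4) (exp (- w u v / 2) * Q u v)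
       (- (/2) * exp (w u v / 2) * (H u v - 1)) (du w u v / 4).
Definition V2 : R -> R -> mat2 := fun u v =>
  Mat2 (dv w u v / 4) (/2 * exp (w u v / 2) * (H u v + 1))
       (- exp (- w u v / 2) * Rr u v) (- dv w u v / 4).
Definition U2' : R -> R -> mat2 := fun u v =>
  Mat2 (du w u v / 4) (/2 * exp (w u v / 2) * (H u v - 1))
       (- exp (- w u v / 2) * Q u v) (- du w u v / 4).
Definition V2' : R -> R -> mat2 := fun u v =>
  Mat2 (- dv w u v / 4) (exp (- w u v / 2) * Rr u v)
       (- (/2) * exp (w u v / 2) * (H u v + 1)) (dv w u v / 4).
End LaxMatrices.

Definition solves_L1 M w H Q Rr (P1 P2 : R -> R -> mat2) : Prop :=
  SL2_valued M P1 /\ SL2_valued M P2 /\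
  lax_u M P1 (U1 w H Q) /\ lax_v M P1 (V1 w H Rr) /\
  lax_u M P2 (U2 w H Q) /\ lax_v M P2 (V2 w H Rr).

Definition solves_L2 M w H Q Rr (S1 S2 : R -> R -> mat2) : Prop :=
  SL2_valued M S1 /\ SL2_valued M S2 /\
  lax_u M S1 (U1 w H Q) /\ lax_v M S1 (V1 w H Rr) /\
  lax_u M S2 (U2' w H Q) /\ lax_v M S2 (V2' w H Rr).

Definition GpPhi (P1 P2 : R -> R -> mat2) : (R -> R -> R) * (R -> R -> R) :=
  (fun u v => m1 (P1 u v) / m3 (P1 u v), fun u v => m1 (P2 u v) / m3 (P2 u v)).
Definition GmPhi (P1 P2 : R -> R -> mat2) : (R -> R -> R) * (R -> R -> R) :=
  (fun u v => m2 (P1 u v) / m4 (P1 u v), fun u v => m2 (P2 u v) / m4 (P2 u v)).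
Definition GpPsi (S1 S2 : R -> R -> mat2) : (R -> R -> R) * (R -> R -> R) :=
  (fun u v => m1 (S1 u v) / m3 (S1 u v), fun u v => - (m4 (S2 u v) / m2 (S2 u v))).
Definition GmPsi (S1 S2 : R -> R -> mat2) : (R -> R -> R) * (R -> R -> R) :=
  (fun u v => m2 (S1 u v) / m4 (S1 u v), fun u v => - (m3 (S2 u v) / m1 (S2 u v))).

Definition admissible (M W : R -> R -> Prop) (d1 d2 : R -> R -> R) : Prop :=
  open2 W /\ (forall u v, W u v -> M u v) /\
  (forall u v, W u v -> d1 u v <> 0 /\ d2 u v <> 0).

Definition du_vanishes (W : R -> R -> Prop) (G : (R -> R -> R) * (R -> R -> R)) : Prop :=
  forall u v, W u v ->
    is_derive (fun x => fst G x v) u 0 /\ is_derive (fun x => snd G x v) u 0.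
Definition dv_vanishes (W : R -> R -> Prop) (G : (R -> R -> R) * (R -> R -> R)) : Prop :=
  forall u v, W u v ->
    is_derive (fun y => fst G u y) v 0 /\ is_derive (fun y => snd G u y) v 0.

Definition const_on (W : R -> R -> Prop) (f : R -> R -> R) (c : R) : Prop :=
  forall u v, W u v -> f u v = c.

(* Main.v *)
Require Import Defs.
From Stdlib Require Import Reals Lra.
From Coquelicot Require Import Coquelicot.
Open Scope R_scope.

Lemma is_derive_eq (f : R -> R) x (l l' : R) : is_derive f x l -> l = l' -> is_derive f x l'.
Proof. intros; subst; auto. Qed.

Lemma div_zero (f g : R -> R) (x df dg : R) : is_derive f x df -> is_derive g x dg -> g x <> 0 ->
  (is_derive (fun t => f t / g t) x 0 <-> df * g x - f x * dg = 0).
Proof.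
  intros Hf Hg Hz. pose proof (is_derive_div f g x df dg Hf Hg Hz) as Hd.
  assert (g x ^ 2 <> 0) by (apply pow_nonzero; auto).
  split.
  - intro H0. apply is_derive_unique in H0. apply is_derive_unique in Hd.
    assert (E : 0 = (df * g x - f x * dg) / g x ^ 2) by (rewrite <- H0, <- Hd; reflexivity).
    replace (df * g x - f x * dg) with ((df * g x - f x * dg) / g x ^2 * g x ^ 2) by (field; auto).
    rewrite <- E. ring.
  - intro HN. rewrite HN in Hd. replace 0 with (0 / g x ^ 2) by (field; auto). exact Hd.
Qed.

Lemma ndiv_zero (f g : R -> R) (x df dg : R) : is_derive f x df -> is_derive g x dg -> g x <> 0 ->
  (is_derive (fun t => - (f t / g t)) x 0 <-> df * g x - f x * dg = 0).
Proof.
  intros Hf Hg Hz. rewrite <- (div_zero f g x df dg Hf Hg Hz). split; intro H0.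
  - apply is_derive_opp in H0. eapply is_derive_ext; [|eapply is_derive_eq; [exact H0| unfold opp; simpl; ring]].
    intro t; unfold opp; simpl; ring.
  - apply is_derive_opp in H0. eapply is_derive_ext; [|eapply is_derive_eq; [exact H0| unfold opp; simpl; ring]].
    intro t; reflexivity.
Qed.

Lemma L13 (F : R -> mat2) x (A : mat2) :
  is_derive (fun t => m1 (F t)) x (m1 (mmul (F x) A)) ->
  is_derive (fun t => m3 (F t)) x (m3 (mmul (F x) A)) ->
  det2 (F x) = 1 -> m3 (F x) <> 0 ->
  (is_derive (fun t => m1 (F t) / m3 (F t)) x 0 <-> m3 A = 0).
Proof.
  intros h1 h3 hd hz. rewrite (div_zero _ _ _ _ _ h1 h3 hz).
  replace (m1 (mmul (F x) A) * m3 (F x) - m1 (F x) * m3 (mmul (F x) A))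
    with (- m3 A * det2 (F x)) by (unfold det2, mmul; simpl; ring).
  rewrite hd. lra.
Qed.

Lemma L24 (F : R -> mat2) x (A : mat2) :
  is_derive (fun t => m2 (F t)) x (m2 (mmul (F x) A)) ->
  is_derive (fun t => m4 (F t)) x (m4 (mmul (F x) A)) ->
  det2 (F x) = 1 -> m4 (F x) <> 0 ->
  (is_derive (fun t => m2 (F t) / m4 (F t)) x 0 <-> m2 A = 0).
Proof.
  intros h1 h3 hd hz. rewrite (div_zero _ _ _ _ _ h1 h3 hz).
  replace (m2 (mmul (F x) A) * m4 (F x) - m2 (F x) * m4 (mmul (F x) A))
    with (m2 A * det2 (F x)) by (unfold det2, mmul; simpl; ring).
  rewrite hd. lra.
Qed.

Lemma L42 (F : R -> mat2) x (A : mat2) :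
  is_derive (fun t => m4 (F t)) x (m4 (mmul (F x) A)) ->
  is_derive (fun t => m2 (F t)) x (m2 (mmul (F x) A)) ->
  det2 (F x) = 1 -> m2 (F x) <> 0 ->
  (is_derive (fun t => - (m4 (F t) / m2 (F t))) x 0 <-> m2 A = 0).
Proof.
  intros h1 h3 hd hz. rewrite (ndiv_zero _ _ _ _ _ h1 h3 hz).
  replace (m4 (mmul (F x) A) * m2 (F x) - m4 (F x) * m2 (mmul (F x) A))
    with (- m2 A * det2 (F x)) by (unfold det2, mmul; simpl; ring).
  rewrite hd. lra.
Qed.

Lemma L31 (F : R -> mat2) x (A : mat2) :
  is_derive (fun t => m3 (F t)) x (m3 (mmul (F x) A)) ->
  is_derive (fun t => m1 (F t)) x (m1 (mmul (F x) A)) ->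
  det2 (F x) = 1 -> m1 (F x) <> 0 ->
  (is_derive (fun t => - (m3 (F t) / m1 (F t))) x 0 <-> m3 A = 0).
Proof.
  intros h1 h3 hd hz. rewrite (ndiv_zero _ _ _ _ _ h1 h3 hz).
  replace (m3 (mmul (F x) A) * m1 (F x) - m3 (F x) * m1 (mmul (F x) A))
    with (m3 A * det2 (F x)) by (unfold det2, mmul; simpl; ring).
  rewrite hd. lra.
Qed.

Lemma c1 a X : - exp a * X = 0 <-> X = 0.
Proof. pose proof (exp_pos a). split; intro h; [|rewrite h; ring].
  apply Rmult_integral in h; destruct h; [lra|auto]. Qed.
Lemma c2 a X : exp a * X = 0 <-> X = 0.
Proof. pose proof (exp_pos a). split; intro h; [|rewrite h; ring].
  apply Rmult_integral in h; destruct h; [lra|auto]. Qed.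
Lemma c3 a X : / 2 * exp a * (X + 1) = 0 <-> X = -1.
Proof. pose proof (exp_pos a). split; intro h; [|rewrite h; ring].
  apply Rmult_integral in h; destruct h as [h|h]; [apply Rmult_integral in h; destruct h; lra|lra]. Qed.
Lemma c4 a X : - / 2 * exp a * (X - 1) = 0 <-> X = 1.
Proof. pose proof (exp_pos a). split; intro h; [|rewrite h; ring].
  apply Rmult_integral in h; destruct h as [h|h]; [apply Rmult_integral in h; destruct h; lra|lra]. Qed.

Lemma c5 a X : / 2 * exp a * (X - 1) = 0 <-> X = 1.
Proof. pose proof (exp_pos a). split; intro h; [|rewrite h; ring].
  apply Rmult_integral in h; destruct h as [h|h]; [apply Rmult_integral in h; destruct h; lra|lra]. Qed.
Lemma c6 a X : - / 2 * exp a * (X + 1) = 0 <-> X = -1.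
Proof. pose proof (exp_pos a). split; intro h; [|rewrite h; ring].
  apply Rmult_integral in h; destruct h as [h|h]; [apply Rmult_integral in h; destruct h; lra|lra]. Qed.

Lemma lift (W : R -> R -> Prop) (P A B : R -> R -> Prop) :
  (forall u v, W u v -> (P u v <-> A u v /\ B u v)) ->
  ((forall u v, W u v -> P u v) <-> (forall u v, W u v -> A u v) /\ (forall u v, W u v -> B u v)).
Proof. intro h; split.
  - intro hp; split; intros u v hw; apply (h u v hw), hp, hw.
  - intros [ha hb] u v hw; apply (h u v hw); auto. Qed.

Lemma liftU W (G : (R -> R -> R) * (R -> R -> R)) (f1 f2 : R -> R -> R) k1 k2 :
  (forall u v, W u v -> (is_derive (fun x => fst G x v) u 0 /\ is_derive (fun x => snd G x v) u 0
     <-> f1 u v = k1 /\ f2 u v = k2)) ->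
  (du_vanishes W G <-> const_on W f1 k1 /\ const_on W f2 k2).
Proof. intro h. unfold du_vanishes, const_on. apply (lift W _ (fun u v => f1 u v = k1) (fun u v => f2 u v = k2)). exact h. Qed.
Lemma liftV W (G : (R -> R -> R) * (R -> R -> R)) (f1 f2 : R -> R -> R) k1 k2 :
  (forall u v, W u v -> (is_derive (fun y => fst G u y) v 0 /\ is_derive (fun y => snd G u y) v 0
     <-> f1 u v = k1 /\ f2 u v = k2)) ->
  (dv_vanishes W G <-> const_on W f1 k1 /\ const_on W f2 k2).
Proof. intro h. unfold dv_vanishes, const_on. apply (lift W _ (fun u v => f1 u v = k1) (fun u v => f2 u v = k2)). exact h. Qed.

Theorem theorem13p1
  (M : R -> R -> Prop) (w H Q Rr : R -> R -> R)
  (Phi1 Phi2 Psi1 Psi2 : R -> R -> mat2) :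
  simply_connected_domain M ->
  smooth_on M w -> smooth_on M H -> smooth_on M Q -> smooth_on M Rr ->
  solves_L1 M w H Q Rr Phi1 Phi2 ->
  solves_L2 M w H Q Rr Psi1 Psi2 ->
  (* G^+_Phi, denominators Phi13, Phi23 *)
  (forall W, admissible M W (fun u v => m3 (Phi1 u v)) (fun u v => m3 (Phi2 u v)) ->
     (du_vanishes W (GpPhi Phi1 Phi2) <-> const_on W H 1 /\ const_on W Q 0) /\
     (dv_vanishes W (GpPhi Phi1 Phi2) <-> const_on W H 1 /\ const_on W Rr 0)) /\
  (* G^-_Phi, denominators Phi14, Phi24 *)
  (forall W, admissible M W (fun u v => m4 (Phi1 u v)) (fun u v => m4 (Phi2 u v)) ->
     (du_vanishes W (GmPhi Phi1 Phi2) <-> const_on W H (-1) /\ const_on W Q 0) /\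
     (dv_vanishes W (GmPhi Phi1 Phi2) <-> const_on W H (-1) /\ const_on W Rr 0)) /\
  (* G^+_Psi, denominators Psi13, Psi22 *)
  (forall W, admissible M W (fun u v => m3 (Psi1 u v)) (fun u v => m2 (Psi2 u v)) ->
     (du_vanishes W (GpPsi Psi1 Psi2) <-> const_on W H 1 /\ const_on W Q 0) /\
     (dv_vanishes W (GpPsi Psi1 Psi2) <-> const_on W H 1 /\ const_on W Rr 0)) /\
  (* G^-_Psi, denominators Psi14, Psi21 *)
  (forall W, admissible M W (fun u v => m4 (Psi1 u v)) (fun u v => m1 (Psi2 u v)) ->
     (du_vanishes W (GmPsi Psi1 Psi2) <-> const_on W H (-1) /\ const_on W Q 0) /\
     (dv_vanishes W (GmPsi Psi1 Psi2) <-> const_on W H (-1) /\ const_on W Rr 0)).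
Proof.
  intros _ _ _ _ _ [d1 [d2 [lu1 [lv1 [lu2 lv2]]]]] [e1 [e2 [mu1 [mv1 [mu2 mv2]]]]].
  split; [|split; [|split]]; intros W [HWo [HWM HWd]]; split;
    first [apply liftU | apply liftV]; intros u v hw;
    pose proof (HWM u v hw) as HM; destruct (HWd u v hw) as [z1 z2];
    destruct (lu1 u v HM) as [a1 [a2 [a3 a4]]];
    destruct (lu2 u v HM) as [b1 [b2 [b3 b4]]];
    destruct (lv1 u v HM) as [a1' [a2' [a3' a4']]];
    destruct (lv2 u v HM) as [b1' [b2' [b3' b4']]];
    destruct (mu1 u v HM) as [p1 [p2 [p3 p4]]];
    destruct (mu2 u v HM) as [q1 [q2 [q3 q4]]];
    destruct (mv1 u v HM) as [p1' [p2' [p3' p4']]];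
    destruct (mv2 u v HM) as [q1' [q2' [q3' q4']]];
    unfold GpPhi, GmPhi, GpPsi, GmPsi; simpl fst; simpl snd.
  - rewrite (L13 (fun t => Phi1 t v) u _ a1 a3 (d1 u v HM) z1).
    rewrite (L13 (fun t => Phi2 t v) u _ b1 b3 (d2 u v HM) z2).
    unfold U1, U2, V1, V2, U2', V2'; simpl. rewrite ?c1, ?c3, ?c4, ?c5, ?c6, ?c2. tauto.
  - rewrite (L13 (fun t => Phi1 u t) v _ a1' a3' (d1 u v HM) z1).
    rewrite (L13 (fun t => Phi2 u t) v _ b1' b3' (d2 u v HM) z2).
    unfold U1, U2, V1, V2, U2', V2'; simpl. rewrite ?c1, ?c3, ?c4, ?c5, ?c6, ?c2. tauto.
  - rewrite (L24 (fun t => Phi1 t v) u _ a2 a4 (d1 u v HM) z1).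
    rewrite (L24 (fun t => Phi2 t v) u _ b2 b4 (d2 u v HM) z2).
    unfold U1, U2, V1, V2, U2', V2'; simpl. rewrite ?c1, ?c3, ?c4, ?c5, ?c6, ?c2. tauto.
  - rewrite (L24 (fun t => Phi1 u t) v _ a2' a4' (d1 u v HM) z1).
    rewrite (L24 (fun t => Phi2 u t) v _ b2' b4' (d2 u v HM) z2).
    unfold U1, U2, V1, V2, U2', V2'; simpl. rewrite ?c1, ?c3, ?c4, ?c5, ?c6, ?c2. tauto.
  - rewrite (L13 (fun t => Psi1 t v) u _ p1 p3 (e1 u v HM) z1).
    rewrite (L42 (fun t => Psi2 t v) u _ q4 q2 (e2 u v HM) z2).
    unfold U1, U2, V1, V2, U2', V2'; simpl. rewrite ?c1, ?c3, ?c4, ?c5, ?c6, ?c2. tauto.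
  - rewrite (L13 (fun t => Psi1 u t) v _ p1' p3' (e1 u v HM) z1).
    rewrite (L42 (fun t => Psi2 u t) v _ q4' q2' (e2 u v HM) z2).
    unfold U1, U2, V1, V2, U2', V2'; simpl. rewrite ?c1, ?c3, ?c4, ?c5, ?c6, ?c2. tauto.
  - rewrite (L24 (fun t => Psi1 t v) u _ p2 p4 (e1 u v HM) z1).
    rewrite (L31 (fun t => Psi2 t v) u _ q3 q1 (e2 u v HM) z2).
    unfold U1, U2, V1, V2, U2', V2'; simpl. rewrite ?c1, ?c3, ?c4, ?c5, ?c6, ?c2. tauto.
  - rewrite (L24 (fun t => Psi1 u t) v _ p2' p4' (e1 u v HM) z1).
    rewrite (L31 (fun t => Psi2 u t) v _ q3' q1' (e2 u v HM) z2).
    unfold U1, U2, V1, V2, U2', V2'; simpl. rewrite ?c1, ?c3, ?c4, ?c5, ?c6, ?c2. tauto.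
Qed.
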